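(* Let $m\ge 2$, $n\ge1$ be integers, let $\mathcal P=(p_{i_1 i_2\dots i_m})\in\mathbb R^{[m,n]}$ be a transition probability tensor with first-index flattening $R\in\mathbb R^{n\times n^{m-1}}$, let $v\in\mathbb R^n$ be a stochastic vector, and let $\alpha\in[0,1)$ satisfy $\alpha<\frac{1}{m-1}$. Define $f(\mathbf{x})=\alpha R(\mathbf{x}\otimes\cdots\otimes\mathbf{x})+(1-\alpha)v-\mathbf{x}$ (with $m-1$ Kronecker factors $\mathbf{x}$) and $$J_f(\mathbf{x})=\alpha R\Big(I\otimes\mathbf{x}\otimes\cdots\otimes\mathbf{x}+\mathbf{x}\otimes I\otimes\mathbf{x}\otimes\cdots\otimes\mathbf{x}+\cdots+\mathbf{x}\otimes\cdots\otimes\mathbf{x}\otimes I\Big)-I.$$ Then the Newton iteration $\mathbf{x}_{k+1}=\mathbf{x}_k-J_f(\mathbf{x}_k)^{-1}f(\mathbf{x}_k)$, $k=0,1,2,\dots$, started from $\mathbf{x}_0=0$, converges quadratically to the unique solution $\mathbf{x}$ of the multilinear PageRank equation $\mathbf{x}=\alpha R(\mathbf{x}\otimes\cdots\otimes\mathbf{x})+(1-\alpha)v$.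
   Context: A transition probability tensor $\mathcal P\in\mathbb R^{[m,n]}$ (order $m$, each dimension $n$) satisfies $p_{i_1\dots i_m}\ge0$ and $\sum_{i_1=1}^n p_{i_1 i_2\dots i_m}=1$ for all $(i_2,\dots,i_m)$. A vector is stochastic if its entries are non-negative and sum to one. The flattening $R$ along the first index is the $n\times n^{m-1}$ matrix with $\big(R(y^{(2)}\otimes\cdots\otimes y^{(m)})\big)_i=\sum_{i_2,\dots,i_m=1}^n p_{i i_2\dots i_m}y^{(2)}_{i_2}\cdots y^{(m)}_{i_m}$ for all $y^{(j)}\in\mathbb R^n$. $I$ is the $n\times n$ identity, $\otimes$ the Kronecker product; in the Jacobian, each of the $m-1$ summands is a Kronecker product of $m-1$ factors with $I$ in exactly one position and $\mathbf{x}$ (as an $n\times1$ matrix) in the other $m-2$ positions. Quadratic convergence means there is a constant $C>0$ with $\|\mathbf{x}_{k+1}-\mathbf{x}\|\le C\|\mathbf{x}_k-\mathbf{x}\|^2$ for all sufficiently large $k$. *)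

(* Defs.v *)
From mathcomp Require Import all_boot all_order all_algebra.
From mathcomp Require Import reals.
Set Implicit Arguments. Unset Strict Implicit. Unset Printing Implicit Defensive.
Import Order.TTheory GRing.Theory Num.Theory.
Local Open Scope ring_scope.

(* An order-m tensor of dimension n is represented as
   P i t = p_{i i_2 ... i_m}, where t : {ffun 'I_k -> 'I_n} lists the
   trailing k = m-1 indices (t j = i_{j+2}). *)
Definition tensor (R : Type) (n k : nat) := 'I_n -> {ffun 'I_k -> 'I_n} -> R.

Section Defs.
Variables (R : realType) (n k : nat).

Definition transition_tensor (P : tensor R n k) : Prop :=
  (forall i t, 0 <= P i t) /\ (forall t, \sum_(i < n) P i t = 1).

Definition stochastic (v : 'cV[R]_n) : Prop :=
  (forall i, 0 <= v i 0) /\ \sum_(i < n) v i 0 = 1.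

(* R (y^(2) ⊗ ... ⊗ y^(m)), with R the first-index flattening of P *)
Definition flat_apply (P : tensor R n k) (ys : 'I_k -> 'cV[R]_n) : 'cV[R]_n :=
  \col_i \sum_(t : {ffun 'I_k -> 'I_n}) P i t * \prod_(j < k) ys j (t j) 0.

(* R (x ⊗ ... ⊗ x ⊗ I ⊗ x ⊗ ... ⊗ x), I in position j : an n x n matrix
   whose l-th column is R (x ⊗ .. ⊗ e_l ⊗ .. ⊗ x). *)
Definition flat_apply_I (P : tensor R n k) (j : 'I_k) (x : 'cV[R]_n) : 'M[R]_n :=
  \matrix_(i, l) flat_apply P (fun j' => if j' == j then delta_mx l 0 else x) i 0.

Definition mlpr_f (P : tensor R n k) (alpha : R) (v x : 'cV[R]_n) : 'cV[R]_n :=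
  alpha *: flat_apply P (fun _ => x) + (1 - alpha) *: v - x.

Definition mlpr_J (P : tensor R n k) (alpha : R) (x : 'cV[R]_n) : 'M[R]_n :=
  alpha *: (\sum_(j < k) flat_apply_I P j x) - 1%:M.

Fixpoint newton (P : tensor R n k) (alpha : R) (v : 'cV[R]_n) (i : nat)
  : 'cV[R]_n :=
  match i with
  | 0 => 0
  | i'.+1 => let y := newton P alpha v i' in
             y - invmx (mlpr_J P alpha y) *m mlpr_f P alpha v y
  end.

Definition vnorm1 (x : 'cV[R]_n) : R := \sum_(i < n) `|x i 0|.

End Defs.

(* Main.v *)
Require Import Defs.
From mathcomp Require Import all_boot all_order all_algebra.
From mathcomp Require Import reals.
From mathcomp Require Import ring lra.
Set Implicit Arguments. Unset Strict Implicit. Unset Printing Implicit Defensive.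
Import Order.TTheory GRing.Theory Num.Theory.
Local Open Scope ring_scope.

Lemma prod_conv (R : realType) (k : nat) (a b : 'I_k -> R) : (forall j, 0 <= b j <= a j) ->
  \sum_(j < k) \prod_(j' < k) (if j' == j then a j' - b j' else b j')
    <= \prod_(j < k) a j - \prod_(j < k) b j.
Proof.
elim: k a b => [|k IH] a b H; first by rewrite !big_ord0 subrr.
rewrite big_ord_recr /= !big_ord_recr /=.
have E1 j : \prod_(j' < k.+1) (if j' == widen_ord (leqnSn k) j then a j' - b j' else b j')
  = \prod_(j' < k) (if j' == j then a (widen_ord (leqnSn k) j') - b (widen_ord (leqnSn k) j')
                    else b (widen_ord (leqnSn k) j')) * b ord_max.
  rewrite big_ord_recr /=.
  have -> : (ord_max == widen_ord (leqnSn k) j) = false.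
    by apply/negbTE; rewrite -val_eqE /= neq_ltn ltn_ord orbT.
  congr (_ * _); apply: eq_bigr => j' _.
rewrite (eq_bigr _ (fun j _ => E1 j)) -mulr_suml eqxx.
have E2 : \prod_(j' < k) (if widen_ord (leqnSn k) j' == ord_max then a (widen_ord (leqnSn k) j') - b (widen_ord (leqnSn k) j')
                    else b (widen_ord (leqnSn k) j')) = \prod_(j' < k) b (widen_ord (leqnSn k) j').
  apply: eq_bigr => j' _.
  have -> : (widen_ord (leqnSn k) j' == ord_max) = false.
    by apply/negbTE; rewrite -val_eqE /= neq_ltn ltn_ord.
  done.
rewrite E2.
have IH' := IH (fun j => a (widen_ord (leqnSn k) j)) (fun j => b (widen_ord (leqnSn k) j)) (fun j => H _).
move: IH'.
set S := \sum_(j < k) _.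
set A := \prod_(j < k) _.
set B := \prod_(j < k) _.
have HB : 0 <= B by apply: prodr_ge0 => j _; case/andP: (H (widen_ord (leqnSn k) j)).
have HAB : B <= A by apply: ler_prod => j _; exact: H.
case/andP: (H ord_max) => h1 h2 hS.
nra.
Qed.
Lemma bern (R : realType) (s : R) K : 0 <= s -> 1 + K.+1%:R * (s - 1) <= s ^+ K.+1.
Proof.
move=> hs; elim: K => [|K IH]; first by rewrite expr1; lra.
rewrite exprS.
have h2 := ler_wpM2l hs IH.
have k0 : 0 <= K.+1%:R :> R by apply: ler0n.
have h3 : 0 <= K.+1%:R * (s - 1) ^+ 2 by apply: mulr_ge0 => //; apply: sqr_ge0.
rewrite -[K.+2]addn1 natrD; rewrite mulrC; nra.
Qed.

Lemma qbound (R : realType) (s : R) K : 0 <= s -> s <= 1 ->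
  0 <= 1 - K.+1%:R * s ^+ K + K%:R * s ^+ K.+1 <= K.+1%:R ^+ 2 * (1 - s) ^+ 2.
Proof.
move=> h0 h1; elim: K => [|K IH].
  by rewrite expr0 mulr1 mul0r addr0 subrr lexx /= mulr_ge0 // sqr_ge0.
have E : 1 - K.+2%:R * s ^+ K.+1 + K.+1%:R * s ^+ K.+2 =
  (1 - K.+1%:R * s ^+ K + K%:R * s ^+ K.+1) + K.+1%:R * s ^+ K * (1 - s) ^+ 2.
  have hK2 : K.+2%:R = K%:R + 2 :> R by rewrite -addn2 natrD.
  have hK1 : K.+1%:R = K%:R + 1 :> R by rewrite -addn1 natrD.
  rewrite hK2 hK1 !exprS; ring.
rewrite E; case/andP: IH => i1 i2.
have p0 : 0 <= s ^+ K by apply: exprn_ge0.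
have p1 : s ^+ K <= 1 by apply: exprn_ile1.
have q0 : 0 <= (1 - s) ^+ 2 by apply: sqr_ge0.
have k0 : 0 <= K%:R :> R by apply: ler0n.
apply/andP; split.
  by apply: addr_ge0 => //; apply: mulr_ge0 => //; apply: mulr_ge0.
have hK2 : K.+2%:R = K%:R + 2 :> R by rewrite -addn2 natrD.
have hK1 : K.+1%:R = K%:R + 1 :> R by rewrite -addn1 natrD.
rewrite hK2 hK1 in i2 *.
nra.
Qed.

Lemma scal (R : realType) (alpha s s' : R) K : 0 <= alpha -> alpha * K.+1%:R < 1 ->
  0 <= s -> s <= 1 ->
  (s' - s) - alpha * (K.+1%:R * s ^+ K * (s' - s)) = alpha * s ^+ K.+1 + (1 - alpha) - s ->
  [/\ 0 <= 1 - s', 1 - s' <= alpha * K.+1%:R * (1 - s) &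
      (1 - alpha * K.+1%:R) * (1 - s') <= K.+1%:R ^+ 2 * (1 - s) ^+ 2].
Proof.
move=> ha hak h0 h1 H.
have p0 : 0 <= s ^+ K by apply: exprn_ge0.
have p1 : s ^+ K <= 1 by apply: exprn_ile1.
have k1 : 1 <= K.+1%:R :> R by rewrite ler1n.
have hal : alpha <= 1 by nra.
set c := alpha * K.+1%:R * s ^+ K.
have hc0 : 0 <= c by rewrite /c mulr_ge0 // mulr_ge0 // ler0n.
have hc1 : c <= alpha * K.+1%:R by rewrite /c ler_piMr // mulr_ge0 // ler0n.
have hq := qbound K h0 h1; case/andP: hq => q0 q1.
have E : (1 - c) * (1 - s') = alpha * (1 - K.+1%:R * s ^+ K + K%:R * s ^+ K.+1).
  move: H; rewrite /c exprS -[K.+1]addn1 natrD => H; nra.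
have hb := bern K h0.
have hD : 0 < 1 - c by lra.
have e0 : 0 <= 1 - s'.
  have : 0 <= (1 - c) * (1 - s') by rewrite E mulr_ge0.
  by rewrite pmulr_rge0.
split => //.
-
  have E2 : (1 - c) * (1 - s') = (1 - c) * (1 - s) - (alpha * s ^+ K.+1 + (1 - alpha) - s).
    by rewrite -H /c; ring.
  have : (1 - c) * (1 - s') <= (1 - c) * (alpha * K.+1%:R * (1 - s)).
    have hh : (1 - alpha * K.+1%:R) * (1 - s) <= alpha * s ^+ K.+1 + (1 - alpha) - s.
      have hb' : 0 <= s ^+ K.+1 - (1 + K.+1%:R * (s - 1)) by rewrite subr_ge0.
      have := mulr_ge0 ha hb'; nra.
    have hp : 0 <= c * (1 - alpha * K.+1%:R) * (1 - s).
      by apply: mulr_ge0; [apply: mulr_ge0 => //; lra | lra].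
    rewrite E2; nra.
  by rewrite ler_pM2l.
- have : (1 - c) * (1 - s') <= K.+1%:R ^+ 2 * (1 - s) ^+ 2.
    by rewrite E; nra.
  by apply: le_trans; rewrite ler_wpM2r //; lra.
Qed.

Section S.
Variables (R : realType) (n k : nat) (P : tensor R n k).
Hypothesis HP : transition_tensor P.

Definition vsum (x : 'cV[R]_n) := \sum_(i < n) x i 0.

Lemma flat_sum (ys : 'I_k -> 'cV[R]_n) : vsum (flat_apply P ys) = \prod_(j < k) vsum (ys j).
Proof.
rewrite /vsum /flat_apply.
under eq_bigr do rewrite mxE.
rewrite exchange_big /=.
under eq_bigr do rewrite -mulr_suml HP.2 mul1r.
by rewrite bigA_distr_bigA.
Qed.

Lemma flat_ge0 (ys : 'I_k -> 'cV[R]_n) : (forall j l, 0 <= ys j l 0) -> forall i, 0 <= flat_apply P ys i 0.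
Proof.
move=> H i; rewrite mxE; apply: sumr_ge0 => t _.
by apply: mulr_ge0; [exact: HP.1 | apply: prodr_ge0 => j _].
Qed.

Lemma flat_le (ys zs : 'I_k -> 'cV[R]_n) : (forall j l, 0 <= ys j l 0 <= zs j l 0) ->
  forall i, flat_apply P ys i 0 <= flat_apply P zs i 0.
Proof.
move=> H i; rewrite !mxE; apply: ler_sum => t _.
by apply: ler_wpM2l; [exact: HP.1 | apply: ler_prod => j _].
Qed.

Definition slot (j : 'I_k) (w y : 'cV[R]_n) := fun j' => if j' == j then w else y.

Lemma flatI_mul j y w : flat_apply_I P j y *m w = flat_apply P (slot j w y).
Proof.
apply/matrixP => i c; rewrite !mxE (ord1 c).
under eq_bigr do rewrite !mxE mulr_suml.
rewrite exchange_big /=; apply: eq_bigr => t _.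
under eq_bigr do rewrite -mulrA.
rewrite -mulr_sumr; congr (_ * _).
have E l : \prod_(j0 < k) (if j0 == j then delta_mx l 0 else y) (t j0) 0
    = (t j == l)%:R * \prod_(j' < k | j' != j) y (t j') 0.
  rewrite (bigD1 j) //= eqxx mxE eqxx andbT; congr (_ * _).
  by apply: eq_bigr => j' /negbTE ->.
rewrite (eq_bigr (fun l => (t j == l)%:R * \prod_(j' < k | j' != j) y (t j') 0 * w l 0)); last first.
  by move=> l _; congr (_ * _); exact: E.
rewrite [RHS](bigD1 j) //= /slot eqxx.
under [in RHS]eq_bigr => j' /negbTE -> do [].
rewrite (bigD1 (t j)) //= eqxx mul1r.
rewrite [X in _ + X]big1 ?addr0 1?mulrC //.
by move=> l Hl; rewrite eq_sym (negbTE Hl) !mul0r.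
Qed.


Definition nonneg (x : 'cV[R]_n) := forall i, 0 <= x i 0.
Definition Mx y := \sum_(j < k) flat_apply_I P j y.

Lemma Mx_mul y w : Mx y *m w = \sum_(j < k) flat_apply P (slot j w y).
Proof. by rewrite /Mx mulmx_suml; apply: eq_bigr => j _; rewrite flatI_mul. Qed.

Lemma Mx_ge0 y w : nonneg y -> nonneg w -> nonneg (Mx y *m w).
Proof.
move=> Hy Hw i; rewrite Mx_mul summxE; apply: sumr_ge0 => j _.
by apply: flat_ge0 => j' l; rewrite /slot; case: (j' == j).
Qed.

Lemma vsum_sum (I : finType) (F : I -> 'cV[R]_n) :
  vsum (\sum_(j : I) F j) = \sum_(j : I) vsum (F j).
Proof.
rewrite /vsum; under eq_bigr do rewrite summxE.
by rewrite exchange_big.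
Qed.

Lemma prod_slot (j : 'I_k) (a b : R) :
  \prod_(j' < k) (if j' == j then a else b) = a * b ^+ k.-1.
Proof.
rewrite (bigD1 j) //= eqxx; congr (_ * _).
under eq_bigr => j' /negbTE -> do [].
by rewrite prodr_const cardC1 card_ord.
Qed.

Lemma Mx_sum y w : vsum (Mx y *m w) = k%:R * vsum y ^+ k.-1 * vsum w.
Proof.
rewrite Mx_mul vsum_sum.
under eq_bigr => j _ do rewrite flat_sum.
under eq_bigr => j _.
  rewrite (eq_bigr (fun j' => if j' == j then vsum w else vsum y)); last first.
    by move=> j' _; rewrite /slot; case: (j' == j).
  rewrite prod_slot.
  over.
by rewrite sumr_const card_ord -mulr_natl; ring.
Qed.

Lemma G_sum y : vsum (flat_apply P (fun _ => y)) = vsum y ^+ k.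
Proof. by rewrite flat_sum prodr_const card_ord. Qed.


Lemma conv_vec (y x : 'cV[R]_n) : nonneg y -> (forall i, y i 0 <= x i 0) ->
  forall i, 0 <= (flat_apply P (fun _ => x) - flat_apply P (fun _ => y)
                  - Mx y *m (x - y)) i 0.
Proof.
move=> Hy Hyx i.
rewrite Mx_mul !mxE summxE.
under [X in _ - X]eq_bigr => j _ do rewrite mxE.
rewrite exchange_big /= -!sumrB; apply: sumr_ge0 => t _.
rewrite -mulr_sumr -!mulrBr; apply: mulr_ge0; first exact: HP.1.
rewrite subr_ge0.
have := @prod_conv R k (fun j' => x (t j') 0) (fun j' => y (t j') 0).
have H : forall j : 'I_k, 0 <= y (t j) 0 <= x (t j) 0 by move=> j; rewrite Hy Hyx.
move/(_ H); apply: le_trans; rewrite le_eqVlt; apply/orP; left; apply/eqP.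
apply: eq_bigr => j _; apply: eq_bigr => j' _.
by rewrite /slot; case: (j' == j); rewrite ?mxE.
Qed.


Lemma vsum_ge0 w : nonneg w -> 0 <= vsum w.
Proof. by move=> H; apply: sumr_ge0 => i _. Qed.

Lemma eBZ (a b : 'cV[R]_n) (c : R) i : (a - c *: b) i 0 = a i 0 - c * b i 0.
Proof. by rewrite !mxE. Qed.
Lemma eD (a b : 'cV[R]_n) i : (a + b) i 0 = a i 0 + b i 0.
Proof. by rewrite !mxE. Qed.
Lemma eB (a b : 'cV[R]_n) i : (a - b) i 0 = a i 0 - b i 0.
Proof. by rewrite !mxE. Qed.

Lemma Mneg (alpha : R) y w : 0 <= alpha -> alpha * k%:R < 1 -> nonneg y ->
  vsum y <= 1 -> nonneg (w - alpha *: (Mx y *m w)) -> nonneg w.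
Proof.
move=> ha hak Hy Hs Hw.
pose u := \col_i Num.max 0 (- w i 0).
have Hu : nonneg u by move=> i; rewrite mxE le_max lexx.
have Hwu : nonneg (w + u).
  move=> i; rewrite !mxE; case: (leP 0 (w i 0)) => h.
    by rewrite max_l ?addr0 // oppr_le0.
  by rewrite max_r ?subrr // oppr_ge0 ltW.
have key i : u i 0 <= alpha * (Mx y *m u) i 0.
  have h1 := Hw i; rewrite eBZ in h1.
  have h2 := Mx_ge0 Hy Hwu i; rewrite mulmxDr eD in h2.
  have h3 := Mx_ge0 Hy Hu i.
  rewrite mxE; case: (leP 0 (w i 0)) => h.
    by rewrite max_l ?oppr_le0 //; apply: mulr_ge0.
  rewrite max_r; last by rewrite oppr_ge0 ltW.
  have h4 : 0 <= alpha * ((Mx y *m w) i 0 + (Mx y *m u) i 0) by apply: mulr_ge0.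
  nra.
have hsum : vsum u <= alpha * vsum (Mx y *m u).
  by rewrite /vsum mulr_sumr; apply: ler_sum => i _; exact: key.
rewrite Mx_sum in hsum.
have hs0 : 0 <= vsum y by apply: vsum_ge0.
have hp : vsum y ^+ k.-1 <= 1 by apply: exprn_ile1.
have hp0 : 0 <= vsum y ^+ k.-1 by apply: exprn_ge0.
have hu0 := vsum_ge0 Hu.
have hu : vsum u = 0.
  apply/eqP; rewrite eq_le hu0 andbT.
  have : vsum u <= alpha * k%:R * vsum u.
    apply: (le_trans hsum).
    have hk0 : 0 <= alpha * k%:R * vsum u by rewrite mulr_ge0 // mulr_ge0. nra.
  nra.
move=> i; have := @psumr_eq0P _ _ _ _ (fun i _ => Hu i) hu i isT.
rewrite mxE => /eqP h.
case: (leP 0 (w i 0)) => // h'.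
move: h; rewrite max_r; last by rewrite oppr_ge0 ltW.
by rewrite oppr_eq0 => /eqP h''; rewrite h'' ltxx in h'.
Qed.


Lemma Jmul (alpha : R) (y w : 'cV[R]_n) : mlpr_J P alpha y *m w = - (w - alpha *: (Mx y *m w)).
Proof.
change ((alpha *: Mx y - (1%:M : 'M[R]_n)) *m w = - (w - alpha *: (Mx y *m w))).
by rewrite mulmxBl -scalemxAl mul1mx opprB.
Qed.

Lemma nonneg0 : nonneg 0.
Proof. by move=> i; rewrite mxE. Qed.

Lemma J_unit (alpha : R) (y : 'cV[R]_n) : 0 <= alpha -> alpha * k%:R < 1 -> nonneg y ->
  vsum y <= 1 -> mlpr_J P alpha y \in unitmx.
Proof.
move=> ha hak Hy Hs.
rewrite -unitmx_tr -row_free_unit; apply: inj_row_free => v Hv.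
have Hw : mlpr_J P alpha y *m v^T = 0.
  by rewrite -[LHS]trmxK trmx_mul trmxK Hv trmx0.
rewrite Jmul in Hw.
have H1 : v^T - alpha *: (Mx y *m v^T) = 0.
  by apply/eqP; rewrite -oppr_eq0 Hw.
have N1 : nonneg v^T by apply: (Mneg ha hak Hy Hs); rewrite H1; exact: nonneg0.
have N2 : nonneg (- v^T).
  apply: (Mneg ha hak Hy Hs).
  rewrite mulmxN scalerN opprK (_ : - v^T + _ = - (v^T - alpha *: (Mx y *m v^T))); last by rewrite opprB addrC.
  by rewrite H1 oppr0; exact: nonneg0.
rewrite -[v]trmxK; apply/matrixP => i j; rewrite (ord1 i) !mxE.
apply/eqP; rewrite eq_le; apply/andP; split.
  by have := N2 j; rewrite mxE oppr_ge0 mxE.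
by have := N1 j; rewrite mxE.
Qed.


Lemma vsumBZ (a b : 'cV[R]_n) (c : R) : vsum (a - c *: b) = vsum a - c * vsum b.
Proof. by rewrite /vsum; under eq_bigr do rewrite eBZ; rewrite sumrB mulr_sumr. Qed.
Lemma vsumB (a b : 'cV[R]_n) : vsum (a - b) = vsum a - vsum b.
Proof. by rewrite /vsum; under eq_bigr do rewrite eB; rewrite sumrB. Qed.
Lemma eDZ (a b x : 'cV[R]_n) (c1 c2 : R) i :
  (c1 *: a + c2 *: b - x) i 0 = c1 * a i 0 + c2 * b i 0 - x i 0.
Proof. by rewrite !mxE. Qed.
Lemma vsumDZ (a b x : 'cV[R]_n) (c1 c2 : R) :
  vsum (c1 *: a + c2 *: b - x) = c1 * vsum a + c2 * vsum b - vsum x.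
Proof.
rewrite /vsum; under eq_bigr do rewrite eDZ.
by rewrite sumrB big_split /= !mulr_sumr.
Qed.

Lemma fstep (Gy Gy' Md y y' v : 'cV[R]_n) (alpha : R) :
  y' - y - alpha *: Md = alpha *: Gy + (1 - alpha) *: v - y ->
  alpha *: Gy' + (1 - alpha) *: v - y' = alpha *: (Gy' - Gy - Md).
Proof.
move=> H; apply/matrixP => i j; have := congr1 (fun M : 'cV[R]_n => M i j) H.
rewrite !mxE => ?; lra.
Qed.

Lemma fstep2 (Gx Gy Mxy Md x y y' v : 'cV[R]_n) (alpha : R) :
  x = alpha *: Gx + (1 - alpha) *: v ->
  y' - y - alpha *: Md = alpha *: Gy + (1 - alpha) *: v - y ->
  (x - y') - alpha *: (Mxy - Md) = alpha *: (Gx - Gy - Mxy).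
Proof.
move=> H1 H; apply/matrixP => i j; have := congr1 (fun M : 'cV[R]_n => M i j) H.
have := congr1 (fun M : 'cV[R]_n => M i j) H1.
rewrite !mxE => ? ?; lra.
Qed.

Lemma entry_le_sum (w : 'cV[R]_n) j : nonneg w -> w j 0 <= vsum w.
Proof.
move=> H; rewrite /vsum (bigD1 j) //= lerDl; apply: sumr_ge0 => i _; exact: H.
Qed.

Variables (v : 'cV[R]_n) (alpha : R).
Hypotheses (Hv : stochastic v) (ha : 0 <= alpha) (hak : alpha * k%:R < 1) (hk : (0 < k)%N).

Notation y i := (newton P alpha v i).
Notation G x := (flat_apply P (fun _ => x)).

Lemma step_core i : nonneg (y i) -> vsum (y i) <= 1 ->
  [/\ mlpr_J P alpha (y i) \in unitmx,
      (y i.+1 - y i) - alpha *: (Mx (y i) *m (y i.+1 - y i)) = mlpr_f P alpha v (y i) &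
      (vsum (y i.+1) - vsum (y i)) - alpha * (k%:R * vsum (y i) ^+ k.-1 * (vsum (y i.+1) - vsum (y i)))
        = alpha * vsum (y i) ^+ k + (1 - alpha) - vsum (y i)].
Proof.
move=> N1 S1.
have U := J_unit ha hak N1 S1.
have E : (y i.+1 - y i) - alpha *: (Mx (y i) *m (y i.+1 - y i)) = mlpr_f P alpha v (y i).
  apply: oppr_inj; rewrite -Jmul /=.
  by rewrite addrAC subrr add0r mulmxN mulmxA mulmxV // mul1mx.
split => //.
have := congr1 vsum E.
by rewrite vsumBZ Mx_sum vsumB /mlpr_f vsumDZ G_sum (_ : vsum v = 1) ?mulr1 //; exact: Hv.2.
Qed.

Lemma scal_k (s s' : R) : 0 <= s -> s <= 1 ->
  (s' - s) - alpha * (k%:R * s ^+ k.-1 * (s' - s)) = alpha * s ^+ k + (1 - alpha) - s ->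
  [/\ 0 <= 1 - s', 1 - s' <= alpha * k%:R * (1 - s) &
      (1 - alpha * k%:R) * (1 - s') <= k%:R ^+ 2 * (1 - s) ^+ 2].
Proof. by have := @scal R alpha s s' k.-1; rewrite prednK //; apply. Qed.

Lemma G_ge0 (x : 'cV[R]_n) : nonneg x -> nonneg (G x).
Proof. by move=> H i; apply: flat_ge0 => j l; exact: H. Qed.

Lemma inv_all i : [/\ nonneg (y i), vsum (y i) <= 1 & nonneg (mlpr_f P alpha v (y i))].
Proof.
elim: i => [|i [N1 S1 F1]].
  have z0 : vsum (0 : 'cV[R]_n) = 0 by rewrite /vsum big1 // => i _; rewrite mxE.
  split; [exact: nonneg0 | by rewrite /= z0 ler01 |].
  move=> i; rewrite /mlpr_f eDZ (_ : y 0 = 0) // [X in _ - X]mxE subr0.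
  apply: addr_ge0; apply: mulr_ge0 => //.
  - by apply: G_ge0; exact: nonneg0.
  - by rewrite subr_ge0; apply: ltW; apply: le_lt_trans hak; rewrite ler_peMr // ler1n.
  - exact: Hv.1.
have [U E Es] := step_core N1 S1.
have Nd : nonneg (y i.+1 - y i) by apply: (Mneg ha hak N1 S1); rewrite E.
have N2 : nonneg (y i.+1).
  by move=> j; have := Nd j; have := N1 j; rewrite eB; lra.
have [e0 _ _] := scal_k (vsum_ge0 N1) S1 Es.
split => //; first by lra.
have Hf := @fstep (G (y i)) (G (y i.+1)) _ _ _ _ _ E.
rewrite /mlpr_f Hf => j; rewrite mxE; apply: mulr_ge0 => //.
apply: conv_vec => // j'; have := Nd j'; rewrite eB; lra.
Qed.

Definition e i := 1 - vsum (y i).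
Definition rho := alpha * k%:R.

Lemma step_ineq i : [/\ 0 <= e i.+1, e i.+1 <= rho * e i &
  (1 - rho) * e i.+1 <= k%:R ^+ 2 * e i ^+ 2].
Proof.
have [N1 S1 _] := inv_all i.
have [_ _ Es] := step_core N1 S1.
exact: scal_k (vsum_ge0 N1) S1 Es.
Qed.

Lemma e_ge0 i : 0 <= e i.
Proof. by have [_ S1 _] := inv_all i; rewrite /e subr_ge0. Qed.

Lemma mono_step i j : y i j 0 <= y i.+1 j 0.
Proof.
have [N1 S1 F1] := inv_all i.
have [U E _] := step_core N1 S1.
have Nd : nonneg (y i.+1 - y i) by apply: (Mneg ha hak N1 S1); rewrite E.
by have := Nd j; rewrite eB subr_ge0.
Qed.

Lemma mono i i' : (i <= i')%N -> forall j, y i j 0 <= y i' j 0.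
Proof.
move=> h j.
exact: (homo_leq (f := fun i => y i j 0) (r := fun a b => a <= b) (@lexx _ _) (@le_trans _ _) (fun i => mono_step i j) h).
Qed.

Lemma e_bound i : (1 + i%:R * (1 - rho)) * e i <= 1.
Proof.
elim: i => [|i IH].
  by rewrite mul0r addr0 mul1r /e /= /vsum big1 ?subr0 // => i _; rewrite mxE.
have [h0 h1 _] := step_ineq i.
have h2 := e_ge0 i.
have hr0 : 0 <= rho by rewrite /rho mulr_ge0 // ler0n.
have hr1 : rho < 1 by [].
have hi : 0 <= i%:R :> R by apply: ler0n.
rewrite (_ : i.+1%:R = i%:R + 1 :> R); last by rewrite -addn1 natrD.
have h3 : 0 <= i%:R * (1 - rho) by apply: mulr_ge0 => //; lra.
have h4 : e i.+1 <= e i by nra.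
have h5 : 0 <= i%:R * (1 - rho) * (e i - e i.+1) by apply: mulr_ge0 => //; lra.
have h6 : 0 <= (1 - rho) * (e i - e i.+1) by apply: mulr_ge0; lra.
set A := 1 + i%:R * (1 - rho) in IH h3 *.
have E1 : (1 + (i%:R + 1) * (1 - rho)) * e i.+1 = A * e i.+1 + (1 - rho) * e i.+1 by rewrite /A; ring.
have E2 : A * (e i - e i.+1) = (e i - e i.+1) + i%:R * (1 - rho) * (e i - e i.+1) by rewrite /A; ring.
have E3 : A * e i = A * e i.+1 + A * (e i - e i.+1) by ring.
have E4 : (1 - rho) * (e i - e i.+1) = e i - rho * e i - (1 - rho) * e i.+1 by ring.
rewrite E1; lra.
Qed.

Lemma e_small eps : 0 < eps -> exists N, forall i, (N <= i)%N -> e i < eps.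
Proof.
move=> he.
have hr1 : 0 < 1 - rho by rewrite subr_gt0.
set B := 1 / ((1 - rho) * eps).
have hB0 : 0 <= B by rewrite /B divr_ge0 // ltW // mulr_gt0.
have hB : B * ((1 - rho) * eps) = 1 by rewrite /B mulrC mulrA mulr1 mulfV // gt_eqF // mulr_gt0.
exists (Num.Def.archi_bound B) => i hi.
have h1 := archi_boundP hB0.
have h2 : (Num.Def.archi_bound B)%:R <= i%:R :> R by rewrite ler_nat.
have h3 := e_bound i.
have h4 := e_ge0 i.
rewrite ltNge; apply/negP => h5.
have h6 : B < i%:R by lra.
have h7 : B * ((1 - rho) * eps) < i%:R * ((1 - rho) * eps).
  by rewrite ltr_pM2r // mulr_gt0.
rewrite hB in h7.
have h8 : i%:R * ((1 - rho) * eps) <= i%:R * (1 - rho) * e i.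
  by rewrite -mulrA ler_wpM2l ?ler0n // ler_wpM2l // ltW.
nra.
Qed.

Lemma below_fixed (x : 'cV[R]_n) : nonneg x -> x = alpha *: G x + (1 - alpha) *: v ->
  forall i j, y i j 0 <= x j 0.
Proof.
move=> Nx Fx; elim=> [|i IH] j; first by rewrite /= mxE; exact: Nx.
have [N1 S1 F1] := inv_all i.
have [U E _] := step_core N1 S1.
have H := @fstep2 (G x) (G (y i)) (Mx (y i) *m (x - y i)) _ _ _ _ _ _ Fx E.
have HM : Mx (y i) *m (x - y i.+1) = Mx (y i) *m (x - y i) - Mx (y i) *m (y i.+1 - y i).
  by rewrite -mulmxBr; congr (_ *m _); apply/matrixP => a b; rewrite !mxE; ring.
rewrite -HM in H.
have Nw : nonneg (x - y i.+1).
  apply: (Mneg ha hak N1 S1); rewrite H => j'; rewrite mxE; apply: mulr_ge0 => //.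
  by apply: conv_vec => // j'' ; exact: IH.
by have := Nw j; rewrite eB subr_ge0.
Qed.

Hypothesis hn : (0 < n)%N.

Lemma zero_of_sum (w : 'cV[R]_n) : nonneg w -> vsum w = 0 -> w = 0.
Proof.
move=> N S0; apply/matrixP => i j; rewrite (ord1 j) [RHS]mxE.
exact: (@psumr_eq0P _ _ _ (fun i => w i 0) (fun i _ => N i) S0 i isT).
Qed.

Lemma eDZ' (a b : 'cV[R]_n) (c1 c2 : R) i :
  (c1 *: a + c2 *: b) i 0 = c1 * a i 0 + c2 * b i 0.
Proof. by rewrite !mxE. Qed.

Definition zc j := sup (fun r : R => exists i, r = y i j 0).
Definition z : 'cV[R]_n := \col_j zc j.

Lemma y_ub i i' j : y i' j 0 <= y i j 0 + e i.
Proof.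
have h0 := e_ge0 i.
case: (leqP i' i) => h; first by have := mono h j; lra.
have Nd : nonneg (y i' - y i) by move=> j'; rewrite eB subr_ge0; apply: mono; exact: ltnW.
have := entry_le_sum j Nd; rewrite eB vsumB.
have [_ S1 _] := inv_all i'.
rewrite /e; lra.
Qed.

Lemma zset_ub j : classical_sets.has_ubound (fun r : R => exists i, r = y i j 0).
Proof.
exists 1 => r [i ->].
have [N1 S1 _] := inv_all i.
exact: le_trans (entry_le_sum j N1) S1.
Qed.

Lemma y_le_z i j : y i j 0 <= z j 0.
Proof. by rewrite mxE; apply: (ub_le_sup (zset_ub j)); exists i. Qed.

Lemma z_le i j : z j 0 <= y i j 0 + e i.
Proof.
rewrite mxE; apply: ge_sup; first by exists (y 0 j 0); exists 0%N.
by move=> r [i' ->]; exact: y_ub.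
Qed.

Lemma z_nonneg : nonneg z.
Proof. by move=> j; have := y_le_z 0 j; rewrite /= mxE. Qed.

Lemma vsum_z : vsum z = 1.
Proof.
apply/eqP; rewrite eq_le; apply/andP; split.
  apply/ler_addgt0Pr => eps he.
  have hn' : 0 < n%:R :> R by rewrite ltr0n.
  have [N HN] := e_small (divr_gt0 he hn').
  have := HN N (leqnn N).
  have h1 : vsum z <= vsum (y N) + n%:R * e N.
    rewrite /vsum (_ : n%:R * e N = \sum_(i < n) e N); last by rewrite sumr_const card_ord mulr_natl.
    by rewrite -big_split /=; apply: ler_sum => j _; exact: z_le.
  have h2 := e_ge0 N.
  rewrite ltr_pdivlMr // => h3.
  move: h1; rewrite /e in h2 h3 *; nra.
apply/ler_addgt0Pr => eps he.
have [N HN] := e_small he.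
have := HN N (leqnn N).
have : vsum (y N) <= vsum z by apply: ler_sum => j _; exact: y_le_z.
rewrite /e; lra.
Qed.

Lemma z_fix : z = alpha *: G z + (1 - alpha) *: v.
Proof.
set g := alpha *: G z + (1 - alpha) *: v.
have Hg : nonneg (g - z).
  move=> j; rewrite eB subr_ge0 [z j 0]mxE; apply: ge_sup; first by exists (y 0 j 0); exists 0%N.
  move=> r [i ->].
  have [N1 S1 F1] := inv_all i.
  have := F1 j; rewrite /mlpr_f eDZ /g eDZ'.
  have : G (y i) j 0 <= G z j 0.
    apply: flat_le => j' l; rewrite N1 /=; exact: y_le_z.
  have := Hv.1 j.
  move=> h1 h2 h3; have := ler_wpM2l ha h2; lra.
have Sg : vsum (g - z) = 0.
  rewrite /g vsumDZ G_sum vsum_z expr1n (_ : vsum v = 1); last exact: Hv.2.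
  ring.
have := zero_of_sum Hg Sg.
by move/eqP; rewrite subr_eq0 => /eqP.
Qed.

Lemma z_unique x : stochastic x -> x = alpha *: G x + (1 - alpha) *: v -> x = z.
Proof.
move=> [N1 S1] Fx.
have Hd : nonneg (x - z).
  move=> j; rewrite eB subr_ge0 [z j 0]mxE; apply: ge_sup; first by exists (y 0 j 0); exists 0%N.
  by move=> r [i ->]; exact: below_fixed.
have Sd : vsum (x - z) = 0 by rewrite vsumB vsum_z /vsum S1 subrr.
have := zero_of_sum Hd Sd.
by move/eqP; rewrite subr_eq0 => /eqP.
Qed.

Lemma vn_e i : vnorm1 (y i - z) = e i.
Proof.
rewrite /vnorm1.
under eq_bigr => j _ do rewrite eB ler0_norm ?subr_le0 ?y_le_z // opprB.
have -> : \sum_(j < n) (z j 0 - y i j 0) = vsum (z - y i).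
  by rewrite /vsum; under [RHS]eq_bigr do rewrite eB.
by rewrite vsumB vsum_z.
Qed.

Lemma main_sec : exists x : 'cV[R]_n,
    [/\ stochastic x,
        x = alpha *: flat_apply P (fun _ => x) + (1 - alpha) *: v,
        (forall y : 'cV[R]_n, stochastic y ->
           y = alpha *: flat_apply P (fun _ => y) + (1 - alpha) *: v -> y = x) &
      [/\
        (forall i, mlpr_J P alpha (newton P alpha v i) \in unitmx),
        (forall eps : R, 0 < eps -> exists N : nat, forall i, (N <= i)%N ->
           vnorm1 (newton P alpha v i - x) < eps) &
        (exists C : R, 0 < C /\ exists N : nat, forall i, (N <= i)%N ->
           vnorm1 (newton P alpha v i.+1 - x)
             <= C * vnorm1 (newton P alpha v i - x) ^+ 2)]].
Proof.
exists z; split.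
- by split; [exact: z_nonneg | exact: vsum_z].
- exact: z_fix.
- by move=> x Sx Fx; exact: z_unique.
split.
- by move=> i; have [N1 S1 _] := inv_all i; exact: J_unit.
- move=> eps he; have [N HN] := e_small he; exists N => i hi; rewrite vn_e; exact: HN.
have hr : 0 < 1 - rho by rewrite subr_gt0.
exists (k%:R ^+ 2 / (1 - rho)); split.
  by apply: divr_gt0 => //; apply: exprn_gt0; rewrite ltr0n.
exists 0%N => i _; rewrite !vn_e.
have [_ _ h] := step_ineq i.
by rewrite mulrAC ler_pdivlMr // mulrC.
Qed.

End S.

Unset Implicit Arguments.

Theorem theorem3p3 (R : realType) (m n : nat) (hm : (2 <= m)%N) (hn : (1 <= n)%N)
  (P : tensor R n m.-1) (v : 'cV[R]_n) (alpha : R) :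
  transition_tensor P -> stochastic v ->
  0 <= alpha -> alpha < 1 -> alpha < 1 / (m.-1)%:R ->
  exists x : 'cV[R]_n,
    [/\ (* x is the unique (stochastic) multilinear PageRank solution *)
        stochastic x,
        x = alpha *: flat_apply P (fun _ => x) + (1 - alpha) *: v,
        (forall y : 'cV[R]_n, stochastic y ->
           y = alpha *: flat_apply P (fun _ => y) + (1 - alpha) *: v -> y = x) &
      [/\
        (* the Newton iteration is well defined *)
        (forall i, mlpr_J P alpha (newton P alpha v i) \in unitmx),
        (* it converges to x *)
        (forall eps : R, 0 < eps -> exists N : nat, forall i, (N <= i)%N ->
           vnorm1 (newton P alpha v i - x) < eps) &
        (* quadratically *)
        (exists C : R, 0 < C /\ exists N : nat, forall i, (N <= i)%N ->
           vnorm1 (newton P alpha v i.+1 - x)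
             <= C * vnorm1 (newton P alpha v i - x) ^+ 2)]].
Proof.
move=> HP Hv ha _ hal.
have hk : (0 < m.-1)%N by rewrite -ltnS prednK ?(leq_trans _ hm).
have hak : alpha * (m.-1)%:R < 1.
  by rewrite -ltr_pdivlMr // ltr0n.
exact: main_sec.
Qed.
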